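(* Let $G=(V,E)$ be a finite graph, $q\in\mathbb N$, $\beta\ge0$, and let $P_G$ be the transition matrix of the Swendsen--Wang dynamics for the $q$-state Potts model on $G$ at inverse temperature $\beta$. Let $\sigma,\tau\in\{1,\dots,q\}^V$, $v\in V$ and $k,l\in\{1,\dots,q\}$. Then \[ P_G(\sigma^{v,k},\tau^{v,l})\;\le\;a_3^{\deg_G(v)}\,P_G(\sigma,\tau),\qquad a_3=a_3(\beta,q)=q\,e^{2\beta}-(q-1)e^{\beta}. \]
   Context: Graphs are finite, parallel edges and loops allowed; $\deg_G(v)$ is the number of edges having $v$ as an endvertex. For $\sigma\in\{1,\dots,q\}^V$, $v\in V$, $k\in\{1,\dots,q\}$, $\sigma^{v,k}$ is the configuration equal to $\sigma$ off $v$ and equal to $k$ at $v$. For $A\subseteq E$, $c(A)$ is the number of connected components of $(V,A)$; $E(\sigma)$ is the set of edges whose endvertices have the same color in $\sigma$. With $p=1-e^{-\beta}$, $P_G(\sigma,\tau)=(1-p)^{|E(\sigma)|}\sum_{A\subseteq E(\sigma)\cap E(\tau)}\bigl(\tfrac{p}{1-p}\bigr)^{|A|}q^{-c(A)}$. *)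

(* Defs.v *)
From HB Require Import structures.
From mathcomp Require Import all_boot all_order all_algebra.
From mathcomp Require Import all_classical all_reals all_analysis.
Set Implicit Arguments. Unset Strict Implicit. Unset Printing Implicit Defensive.
Import Order.TTheory GRing.Theory Num.Theory.
Local Open Scope ring_scope.

(* A finite multigraph (parallel edges and loops allowed): vertex type V,
   edge type E, each edge e has endvertices (ends e).1 and (ends e).2
   (a loop has both equal). *)

Section Defs.
Variables (V E : finType) (ends : E -> V * V).

(* deg_G(v): number of edges having v as an endvertex (a loop counts once). *)
Definition deg (v : V) : nat :=
  #|[set e : E | ((ends e).1 == v) || ((ends e).2 == v)]|.

Definition adjA (A : {set E}) : rel V :=
  fun x y => [exists e in A, (ends e == (x, y)) || (ends e == (y, x))].

Definition ncomp (A : {set E}) : nat := n_comp (adjA A) (pred_of_simpl predT).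

Variable q : nat.

(* E(sigma): edges whose endvertices have the same colour; colours are 'I_q
   (standing for {1,...,q}). *)
Definition Emono (s : {ffun V -> 'I_q}) : {set E} :=
  [set e : E | s (ends e).1 == s (ends e).2].

Definition upd (s : {ffun V -> 'I_q}) (v : V) (k : 'I_q) : {ffun V -> 'I_q} :=
  [ffun x => if x == v then k else s x].

Variables (R : realType) (beta : R).

Definition pSW : R := 1 - expR (- beta).

Definition PSW (s t : {ffun V -> 'I_q}) : R :=
  (1 - pSW) ^+ #|Emono s| *
  \sum_(A : {set E} | A \subset Emono s :&: Emono t)
     (pSW / (1 - pSW)) ^+ #|A| * (q%:R ^- ncomp A).

Definition a3 : R := q%:R * expR (2 * beta) - (q%:R - 1) * expR beta.
End Defs.

(* Main.v *)
Require Import Defs.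
From HB Require Import structures.
From mathcomp Require Import all_boot all_order all_algebra.
From mathcomp Require Import all_classical all_reals all_analysis.
From mathcomp Require Import ring lra.
Import Order.TTheory GRing.Theory Num.Theory.
Local Open Scope ring_scope.

Section Graph.
Variables (V E : finType) (ends : E -> V * V).

Lemma adjA_sym A : symmetric (adjA ends A).
Proof.
move=> x y; rewrite /adjA; apply/existsP/existsP => -[e /andP[eA h]];
  by exists e; rewrite eA /= orbC.
Qed.

Lemma adjA_U1 e0 A x y : adjA ends (e0 |: A) x y =
  adjA ends A x y || ((ends e0 == (x, y)) || (ends e0 == (y, x))).
Proof.
rewrite /adjA; apply/existsP/orP.
- case=> e /andP[]; rewrite in_setU1 => /orP[/eqP-> h|eA h]; first by right.
  by left; apply/existsP; exists e; rewrite eA.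
- case=> [/existsP[e /andP[eA h]]|h].
    by exists e; rewrite in_setU1 eA orbT.
  by exists e0; rewrite setU11.
Qed.

Lemma conn_U1 e0 A a b x y : ends e0 = (a, b) ->
  connect (adjA ends (e0 |: A)) x y ->
  connect (adjA ends A) x y ||
  ((connect (adjA ends A) x a || connect (adjA ends A) x b) &&
   (connect (adjA ends A) a y || connect (adjA ends A) b y)).
Proof.
move=> E0; set e := adjA ends A.
move/connectP=> [p pth ->]; elim: p x pth => [|z p IH] x /=.
  by rewrite connect0.
move=> /andP[exz /IH]; set w := last z p.
rewrite adjA_U1 -/e E0 !xpair_eqE in exz; case/orP: exz => [exz|hxz].
  have cxz := connect1 exz.
  case/orP=> [czy | /andP[h1 h2]]; first by rewrite (connect_trans cxz czy).
  apply/orP; right; rewrite h2 andbT.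
  by case/orP: h1 => h; rewrite (connect_trans cxz h) ?orbT.
case/orP: hxz => /andP[/eqP ax /eqP bz]; subst a b;
  by case/orP=> [h| /andP[_ h]]; rewrite (connect0 e x) h ?orbT.
Qed.

Lemma ncomp_U1 e0 A : (ncomp ends A <= (ncomp ends (e0 |: A)).+1)%N.
Proof.
set e := adjA ends A; set e' := adjA ends (e0 |: A).
have se : connect_sym e := sym_connect_sym (adjA_sym A).
have se' : connect_sym e' := sym_connect_sym (adjA_sym (e0 |: A)).
case E0: (ends e0) => [a b].
have cardR f : n_comp f (pred_of_simpl predT) = #|[set x | roots f x]|.
  by apply: eq_card => x; rewrite !inE andbT.
rewrite /ncomp !cardR -/e -/e'.
set R0 := [set x | roots e x] :\ fingraph.root e b.
have inj : {in R0 &, injective (fingraph.root e')}.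
  move=> r1 r2; rewrite !inE => /andP[n1 rt1] /andP[n2 rt2] /eqP.
  rewrite (root_connect se') => c12.
  have fin : connect e r1 r2 -> r1 = r2.
    move=> c; rewrite -(eqP rt1) -(eqP rt2); exact/(fingraph.rootP se).
  apply: fin; have := @conn_U1 e0 A a b r1 r2 E0 c12; rewrite -/e.
  case/orP=> [//|/andP[h1 h2]].
  have c1 : connect e r1 a.
    case/orP: h1 => // h; move/(fingraph.rootP se): h => h.
    by move: n1; rewrite -h (eqP rt1) eqxx.
  have c2 : connect e a r2.
    case/orP: h2 => // h; move/(fingraph.rootP se): h => h.
    by move: n2; rewrite h (eqP rt2) eqxx.
  exact: connect_trans c1 c2.
have sub : fingraph.root e' @: R0 \subset [set x | roots e' x].
  apply/fintype.subsetP=> y /finset.imsetP[x _ ->]; rewrite inE; exact: roots_root.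
rewrite (cardsD1 (fingraph.root e b)) -/R0.
have := subset_leq_card sub; rewrite (card_in_imset inj) => h.
by case: (_ \in _); rewrite /= ?add0n ?add1n ?ltnS // (leq_trans h).
Qed.

Variables (R : realType) (r Q : R).
Hypotheses (r0 : 0 <= r) (Q1 : 1 <= Q).

Definition hh (A : {set E}) : R := r ^+ #|A| * Q ^- ncomp ends A.
Definition SS (F : {set E}) : R := \sum_(A : {set E} | A \subset F) hh A.

Lemma Qpos : 0 < Q. Proof. exact: lt_le_trans ltr01 Q1. Qed.

Lemma hh_ge0 (A : {set E}) : 0 <= hh A.
Proof.
rewrite /hh mulr_ge0 ?exprn_ge0 // invr_ge0 exprn_ge0 //; exact: ltW Qpos.
Qed.

Lemma SS_ge0 (F : {set E}) : 0 <= SS F.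
Proof. by apply: sumr_ge0 => A _; exact: hh_ge0. Qed.

Lemma Qinv_le m n : (m <= n)%N -> Q ^- n <= Q ^- m.
Proof.
move=> mn; rewrite lef_pV2 ?posrE ?exprn_gt0 ?Qpos //.
exact: ler_weXn2l.
Qed.

Lemma hh_U1 (e : E) (A : {set E}) : e \notin A -> hh (e |: A) <= r * Q * hh A.
Proof.
move=> eA; rewrite /hh cardsU1 eA add1n exprS.
have Qn0 : Q != 0 by rewrite gt_eqF // Qpos.
have -> : Q ^- ncomp ends (e |: A) = Q * Q ^- (ncomp ends (e |: A)).+1.
  by rewrite exprS invfM mulrA divff // mul1r.
rewrite -!mulrA; apply: ler_wpM2l => //.
rewrite mulrCA; apply: ler_wpM2l; first exact: ltW Qpos.
apply: ler_wpM2l; first exact: exprn_ge0.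
exact/Qinv_le/ncomp_U1.
Qed.

Lemma SS_mono (G F : {set E}) : G \subset F -> SS G <= SS F.
Proof.
move=> sGF; rewrite /SS big_mkcond [X in _ <= X]big_mkcond /=.
apply: ler_sum => A _; case: ifP => AG; first by rewrite (fintype.subset_trans AG sGF).
by case: ifP => _ //; exact: hh_ge0.
Qed.

Lemma SS_U1 (e : E) (F : {set E}) : SS (e |: F) <= (1 + r * Q) * SS F.
Proof.
have rQ : 0 <= r * Q by rewrite mulr_ge0 // ltW // Qpos.
case: (boolP (e \in F)) => eF.
  have -> : e |: F = F by apply/setP => y; rewrite in_setU1; case: eqP => // ->.
  by rewrite ler_peMl ?SS_ge0 // lerDl.
rewrite /SS (bigID (fun A : {set E} => e \in A) (fun A : {set E} => A \subset e |: F)) /= addrC mulrDl mul1r.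
apply: lerD.
  rewrite le_eqVlt; apply/orP; left; apply/eqP; apply: eq_bigl => A.
  apply/idP/idP.
    move=> /andP[s nA]; apply/fintype.subsetP=> x xA; move/fintype.subsetP: s => /(_ x xA).
    by rewrite in_setU1 => /orP[/eqP xe|//]; move: nA; rewrite -xe xA.
  move=> s; rewrite (fintype.subset_trans s (subsetU1 _ _)) /=.
  by apply/negP => eA; move: eF; rewrite (fintype.subsetP s e eA).
rewrite (reindex_onto (fun A => e |: A) (fun A => A :\ e)) /=; last first.
  by move=> A /andP[_ eA]; exact: finset.setD1K.
rewrite mulr_sumr.
rewrite (eq_bigl (fun A : {set E} => A \subset F)); last first.
  move=> j; apply/idP/idP.
    move=> /andP[/andP[s _] /eqP E'].
    move/fintype.subsetP: s => s; apply/fintype.subsetP=> x xj.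
    have : x \in e |: F by apply: s; rewrite in_setU1 xj orbT.
    rewrite in_setU1 => /orP[/eqP xe|//].
    by move: xj; rewrite -E' xe !inE eqxx.
  move=> s; have ej : e \notin j.
    by apply/negP => eA; move: eF; rewrite (fintype.subsetP s e eA).
  by rewrite setU11 andbT finset.setUS //= setU1K.
apply: ler_sum => A s.
have eA : e \notin A.
  by apply/negP => eA; move: eF; rewrite (fintype.subsetP s e eA).
apply: le_trans (hh_U1 e A eA) _; by rewrite /hh !mulrA.
Qed.

Lemma SS_U (G H : {set E}) : SS (G :|: H) <= (1 + r * Q) ^+ #|H| * SS G.
Proof.
have rQ : 0 <= 1 + r * Q by rewrite addr_ge0 // mulr_ge0 // ltW // Qpos.
have [n cH] : exists n, #|H| = n by eexists.
elim: n H cH => [|n IH] H cH; rewrite cH.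
  by rewrite (cards0_eq cH) finset.setU0 expr0 mul1r.
have [x xH] : exists x, x \in H by apply/set0Pn; rewrite -card_gt0 cH.
have cH' : #|H :\ x| = n by move: cH; rewrite (cardsD1 x) xH add1n => -[].
rewrite -(finset.setD1K xH) finset.setUCA.
apply: le_trans (SS_U1 _ _) _; rewrite exprS -mulrA; apply: ler_wpM2l => //.
rewrite -cH'; exact: IH.
Qed.

End Graph.
Arguments SS {V E} ends {R} r Q F.

Theorem lemma3p8 (V E : finType) (ends : E -> V * V) (q : nat)
    (R : realType) (beta : R) (hbeta : 0 <= beta)
    (sigma tau : {ffun V -> 'I_q}) (v : V) (k l : 'I_q) :
  PSW ends beta (upd sigma v k) (upd tau v l)
    <= a3 q beta ^+ deg ends v * PSW ends beta sigma tau.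
Proof.
rewrite /PSW.
pose D := [set e : E | ((ends e).1 == v) || ((ends e).2 == v)].
have inD e : (e \in D) = ((ends e).1 == v) || ((ends e).2 == v) by rewrite inE.
have mono (s : {ffun V -> 'I_q}) kk e : e \notin D ->
    (e \in Emono ends (upd s v kk)) = (e \in Emono ends s).
  rewrite inD negb_or => /andP[n1 n2].
  by rewrite /Emono !inE !ffunE (negbTE n1) (negbTE n2).
set x := 1 - pSW beta.
set y := expR beta.
have xE : x = y^-1 by rewrite /x /pSW subKr expRN.
have ypos : 0 < y by exact: expR_gt0.
have y1 : 1 <= y by apply: le_trans (expR_ge1Dx beta); rewrite lerDl.
have x0 : 0 <= x by rewrite xE invr_ge0 ltW.
have x1 : x <= 1 by rewrite xE invf_le1.
have rE : pSW beta / x = y - 1.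
  have -> : pSW beta = 1 - x by rewrite /x subKr.
  by rewrite xE invrK mulrBl mul1r mulVf // gt_eqF.
have r0 : 0 <= pSW beta / x by rewrite rE subr_ge0.
have Q1 : 1 <= (q%:R : R) by rewrite ler1n (leq_ltn_trans (leq0n k) (ltn_ord k)).
set r := pSW beta / x.
have SSE (F : {set E}) :
  \sum_(A : {set E} | A \subset F) r ^+ #|A| * (q%:R ^- ncomp ends A) =
  SS ends r q%:R F by [].
rewrite !SSE.
set F := Emono ends sigma :&: Emono ends tau.
set F' := Emono ends (upd sigma v k) :&: Emono ends (upd tau v l).
have GF : F' :\: D \subset F.
  apply/fintype.subsetP => e; rewrite finset.in_setD finset.in_setI => /andP[eD /andP[h1 h2]].
  by rewrite finset.in_setI -(mono sigma k e eD) -(mono tau l e eD) h1 h2.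
have rQ1 : 1 <= 1 + r * q%:R by rewrite lerDl mulr_ge0 // (le_trans ler01 Q1).
have h1 : SS ends r q%:R F' <= (1 + r * q%:R) ^+ #|D| * SS ends r q%:R F.
  have -> : F' = (F' :\: D) :|: (F' :&: D) by rewrite finset.setUC finset.setID.
  apply: le_trans (@SS_U _ _ ends _ _ _ r0 Q1 _ _) _.
  apply: ler_pM.
  - exact: exprn_ge0 (le_trans ler01 rQ1).
  - exact: SS_ge0.
  - by apply: ler_weXn2l => //; apply: subset_leq_card; exact: finset.subsetIr.
  - exact: SS_mono.
have cE : (#|Emono ends sigma| <= #|Emono ends (upd sigma v k)| + #|D|)%N.
  apply: leq_trans (_ : #|Emono ends (upd sigma v k) :|: D| <= _)%N.
    apply: subset_leq_card; apply/fintype.subsetP => e eS.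
    rewrite finset.in_setU; case: (boolP (e \in D)) => eD; first by rewrite orbT.
    by rewrite orbF (mono _ _ _ eD) eS.
  by rewrite cardsU leq_subr.
have h2 : x ^+ #|Emono ends (upd sigma v k)| <=
          y ^+ #|D| * x ^+ #|Emono ends sigma|.
  have h := ler_wiXn2l x0 x1 cE; rewrite exprD in h.
  apply: le_trans (_ : y ^+ #|D| * (x ^+ #|Emono ends (upd sigma v k)| * x ^+ #|D|) <= _).
    by rewrite mulrCA -exprMn xE mulfV ?gt_eqF // expr1n mulr1.
  by apply: ler_wpM2l => //; exact: exprn_ge0 (ltW ypos).
have a3E : a3 q beta = y * (1 + r * q%:R).
  rewrite /a3 /r rE (_ : 2 * beta = beta + beta); last by ring.
  rewrite expRD -/y; ring.
apply: le_trans (_ : x ^+ #|Emono ends (upd sigma v k)| *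
   ((1 + r * q%:R) ^+ #|D| * SS ends r q%:R F) <= _).
  by apply: ler_wpM2l => //; exact: exprn_ge0.
apply: le_trans (_ : y ^+ #|D| * x ^+ #|Emono ends sigma| *
   ((1 + r * q%:R) ^+ #|D| * SS ends r q%:R F) <= _).
  apply: ler_wpM2r => //; apply: mulr_ge0; first exact: exprn_ge0 (le_trans ler01 rQ1).
  exact: SS_ge0.
have -> : deg ends v = #|D| by [].
rewrite a3E exprMn le_eqVlt; apply/orP; left; apply/eqP; ring.
Qed.
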